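(* Let $R$ be an associative ring with identity. The following are equivalent: (1) $R$ has stable range one; (2) for every $c \in R$ and every $x \in R$ such that $yx - 1 \in Rc$ for some $y \in R$, there exists a left unit $u \in R$ with $x - u \in Rc$; (3) for every $c \in R$ and every $x \in R$ such that $xy - 1 \in cR$ for some $y \in R$, there exists a right unit $u \in R$ with $x - u \in cR$.
   Context: A ring $R$ has stable range one if whenever $a, b, x \in R$ satisfy $ax + b = 1$, there exists $y \in R$ such that $a + by$ is a unit (invertible element) of $R$. An element $u \in R$ is a left unit if there exists $v \in R$ with $vu = 1$, and a right unit if there exists $v \in R$ with $uv = 1$. Condition (2) is what the paper calls ''every left unit lifts modulo every left principal ideal'', and condition (3) is what it calls ''every right unit lifts modulo every right principal ideal''. *)

(* Defs.v *)
From mathcomp Require Import all_boot all_algebra.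
Set Implicit Arguments. Unset Strict Implicit. Unset Printing Implicit Defensive.
Import GRing.Theory.
Local Open Scope ring_scope.

Definition stable_range_one (R : unitRingType) : Prop :=
  forall a b x : R, a * x + b = 1 -> exists y : R, (a + b * y) \is a GRing.unit.

Definition left_unit (R : unitRingType) (u : R) : Prop := exists v : R, v * u = 1.
Definition right_unit (R : unitRingType) (u : R) : Prop := exists v : R, u * v = 1.

Definition in_left_principal (R : unitRingType) (c z : R) : Prop := exists r : R, z = r * c.
Definition in_right_principal (R : unitRingType) (c z : R) : Prop := exists r : R, z = c * r.

(* Main.v *)
Require Import Defs.
From mathcomp Require Import all_boot all_algebra.
Import GRing.Theory.
Local Open Scope ring_scope.

Lemma key1 {R : unitRingType} {x a b y s : R} :
  x * a + b = 1 ->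
  (x + b * y) * s = 1 -> s * (x + b * y) = 1 ->
  (x + y * (1 - a * x)) * (a + (1 - a * y) * s * b) = 1 /\
  (a + (1 - a * y) * s * b) * (x + y * (1 - a * x)) = 1.
Proof.
move=> hb us su.
have xa : x * a = 1 - b.
  rewrite -[1]hb. by rewrite (addrK b).
have hb' : b = 1 - x * a.
  by rewrite -[1]hb addrC addKr.
have F1 : (1 - a * x) * a = a * b by rewrite hb' mulrBl mulrBr mul1r mulr1 mulrA.
have F2 : b * x = x * (1 - a * x) by rewrite hb' mulrBl mulrBr mul1r mulr1 mulrA.
split.
- have Va : (x + y * (1 - a * x)) * a = 1 - (1 - y * a) * b.
    by rewrite mulrDl -mulrA F1 xa mulrBl mul1r opprB mulrA addrA addrAC.
  have V1 : (x + y * (1 - a * x)) * (1 - a * y) = (1 - y * a) * (x + b * y).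
    have Vy : x + y * (1 - a * x) - y = (1 - y * a) * x.
      by rewrite mulrBr mulr1 mulrBl mul1r mulrA addrA addrAC (addrK y).
    rewrite mulrBr mulr1 mulrA Va mulrBl mul1r opprB.
    by rewrite (addrCA _ ((1 - y*a)*b*y)) addrC Vy -mulrA -mulrDr.
  by rewrite mulrDr mulrA mulrA V1 -(mulrA (1 - y * a)) us mulr1 Va subrK.
- have bV : b * (x + y * (1 - a * x)) = (x + b * y) * (1 - a * x).
    by rewrite mulrDr F2 mulrA -mulrDl.
  rewrite mulrDl -(mulrA _ b) bV mulrA -(mulrA _ s) su mulr1.
  rewrite mulrDr mulrA mulrBl mul1r.
  by rewrite -addrA (addrC (a * y * (1 - a * x))) subrK subrKC.
Qed.

Lemma key2 {R : unitRingType} {x a b y s : R} :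
  a * x + b = 1 ->
  (x + y * b) * s = 1 -> s * (x + y * b) = 1 ->
  (a + b * s * (1 - y * a)) * (x + (1 - x * a) * y) = 1 /\
  (x + (1 - x * a) * y) * (a + b * s * (1 - y * a)) = 1.
Proof.
move=> hb us su.
have ax : a * x = 1 - b by rewrite -[1]hb (addrK b).
have hb' : b = 1 - a * x by rewrite -[1]hb addrC addKr.
have F1 : a * (1 - x * a) = b * a by rewrite hb' mulrBl mulrBr mul1r mulr1 mulrA.
have F2 : x * b = (1 - x * a) * x by rewrite hb' mulrBl mulrBr mul1r mulr1 mulrA.
split.
- have aV : a * (x + (1 - x * a) * y) = 1 - b * (1 - a * y).
    by rewrite mulrDr mulrA F1 ax mulrBr mulr1 opprB -mulrA addrA addrAC.
  have V1 : (1 - y * a) * (x + (1 - x * a) * y) = (x + y * b) * (1 - a * y).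
    have Vy : x + (1 - x * a) * y - y = x * (1 - a * y).
      by rewrite mulrBl mul1r mulrBr mulr1 mulrA addrA addrAC (addrK y).
    rewrite mulrBl mul1r -mulrA aV mulrBr mulr1 opprB.
    by rewrite (addrCA _ (y * (b * (1 - a * y)))) addrC Vy mulrA -mulrDl.
  by rewrite mulrDl -!mulrA V1 (mulrA s) su mul1r aV subrK.
- have Vb : (x + (1 - x * a) * y) * b = (1 - x * a) * (x + y * b).
    by rewrite mulrDl F2 -mulrA -mulrDr.
  rewrite mulrDr !mulrA Vb -(mulrA (1 - x * a)) us mulr1.
  rewrite mulrDl mulrBr mulr1 -mulrA.
  by rewrite -addrA (addrC ((1 - x * a) * (y * a))) subrK subrKC.
Qed.

Theorem theorem3 (R : unitRingType) :
  (stable_range_one R <->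
   (forall c x : R, (exists y : R, in_left_principal c (y * x - 1)) ->
      exists u : R, left_unit u /\ in_left_principal c (x - u)))
  /\
  (stable_range_one R <->
   (forall c x : R, (exists y : R, in_right_principal c (x * y - 1)) ->
      exists u : R, right_unit u /\ in_right_principal c (x - u))).
Proof.
split; split.
- move=> sr c x [y0 [r hr]].
  have hb : y0 * x + (1 - y0 * x) = 1 by rewrite subrKC.
  have [y /unitrP [s [su us]]] := sr y0 (1 - y0 * x) x hb.
  have [VW WV] := key1 hb us su.
  exists (x + (1 - x * y) * s * (1 - y0 * x)); split.
    by exists (y0 + y * (1 - x * y0)).
  exists ((1 - x * y) * s * r).
  have e : 1 - y0 * x = - (r * c) by rewrite -hr opprB.
  by rewrite opprD addrA subrr add0r e mulrN opprK !mulrA.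
- move=> H a b x hb.
  have h1 : a * x - 1 = -1 * b by rewrite mulN1r -[1]hb opprD addrA subrr add0r.
  have [u [[v vu] [r hr]]] := H b x (ex_intro _ a (ex_intro _ (-1) h1)).
  have h2 : u * v - 1 = -1 * (1 - u * v) by rewrite mulN1r opprB.
  have [w [[t tw] [r' hr']]] := H (1 - u * v) v (ex_intro _ u (ex_intro _ (-1) h2)).
  have ew : w = v - r' * (1 - u * v) by rewrite -hr' subKr.
  have wu : w * u = 1.
    by rewrite ew mulrBl vu -mulrA mulrBl mul1r -mulrA vu mulr1 subrr mulr0 subr0.
  have tu : t = u by rewrite -[t]mulr1 -wu mulrA tw mul1r.
  have uw : u * w = 1 by rewrite -tu.
  have eu : u = x + (- r) * b by rewrite mulNr -hr subKr.
  rewrite eu in uw wu.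
  have [WV VW] := key2 hb uw wu.
  exists (w * (1 - (- r) * a)).
  apply/unitrP; exists (x + (1 - x * a) * (- r)).
  by rewrite mulrA; split.
- move=> sr c x [y [r hr]].
  have hb : x * y + (1 - x * y) = 1 by rewrite subrKC.
  have [z hz] := sr x (1 - x * y) y hb.
  exists (x + (1 - x * y) * z); split.
    by exists ((x + (1 - x * y) * z)^-1); rewrite mulrV.
  exists (r * z).
  have e : 1 - x * y = - (c * r) by rewrite -hr opprB.
  by rewrite opprD addrA subrr add0r e mulNr opprK mulrA.
- move=> H a b x hb.
  have h1 : a * x - 1 = b * -1 by rewrite mulrN1 -[1]hb opprD addrA subrr add0r.
  have [u [[v uv] [r hr]]] := H b a (ex_intro _ x (ex_intro _ (-1) h1)).
  have h2 : v * u - 1 = (1 - v * u) * -1 by rewrite mulrN1 opprB.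
  have [w [[t wt] [r' hr']]] := H (1 - v * u) v (ex_intro _ u (ex_intro _ (-1) h2)).
  have ew : w = v - (1 - v * u) * r' by rewrite -hr' subKr.
  have uw : u * w = 1.
    by rewrite ew mulrBr uv mulrA mulrBr mulr1 mulrA uv mul1r subrr mul0r subr0.
  have tu : u = t by rewrite -[u]mulr1 -wt mulrA uw mul1r.
  have wu : w * u = 1 by rewrite tu.
  exists (- r).
  have eu : u = a + b * (- r) by rewrite mulrN -hr subKr.
  rewrite -eu.
  by apply/unitrP; exists w.
Qed.
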